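(* For every prime $p$ and every $k\ge 2$, $cw(\mathrm{Syl}_p(S_{p^k}))=1$. For every prime $p>2$ and every $k\ge 2$, $cw(\mathrm{Syl}_p(A_{p^k}))=1$.
   Context: $\mathrm{Syl}_p(G)$ denotes a Sylow $p$-subgroup of $G$; $S_n$ and $A_n$ are the symmetric and alternating groups. The commutator width $cw(G)$ is the maximum, over elements $g$ of the derived subgroup $G'$, of the least number of commutators whose product is $g$. *)

(* Defs.v *)
From mathcomp Require Import all_boot all_fingroup all_solvable.
Set Implicit Arguments. Unset Strict Implicit. Unset Printing Implicit Defensive.
Import GroupScope.

Definition prod_of_comms (gT : finGroupType) (G : {set gT}) (m : nat) (g : gT) : Prop :=
  exists s : seq (gT * gT),
    [/\ size s = m, all (fun c => (c.1 \in G) && (c.2 \in G)) s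
      & g = \prod_(c <- s) [~ c.1, c.2]].

Definition commutator_width_is (gT : finGroupType) (G : {set gT}) (n : nat) : Prop :=
  (forall g, g \in G^`(1) -> exists2 m, m <= n & prod_of_comms G m g) /\
  (exists2 g, g \in G^`(1) & forall m, m < n -> ~ prod_of_comms G m g).

(* Main.v *)
Require Import Defs.
From mathcomp Require Import all_boot all_fingroup all_solvable.
From mathcomp Require Import ssralg zmodp.
Set Implicit Arguments. Unset Strict Implicit. Unset Printing Implicit Defensive.


Lemma logn_fact_pow p k : prime p -> logn p (p ^ k)`! = \sum_(i < k) p ^ i.
Proof.
move=> pp; have p1 := prime_gt1 pp; have p0 := prime_gt0 pp.
rewrite logn_fact // (@big_cat_nat _ _ _ k.+1) //=; last by rewrite ltnS ltnW // ltn_expl.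
rewrite [X in _ + X](_ : _ = 0) ?addn0; last first.
  rewrite big_nat_cond big1 // => j /andP[/andP[kj _] _].
  by rewrite divn_small // ltn_exp2l.
rewrite big_add1 /= -(big_mkord xpredT) big_nat_rev /=.
apply: eq_big_nat => i /andP[_ ik].
by rewrite add0n subnSK // -expnB ?leq_subr // subKn // ltnW.
Qed.


Module Helpers.
Import GroupScope.

Section AbProd.
Variables (gT : finGroupType) (A : {group gT}).
Hypothesis abA : abelian A.

Lemma ab_comm x y : x \in A -> y \in A -> commute x y.
Proof. by move=> xA yA; apply: (centsP abA). Qed.

Lemma ab_prod_mem (I : Type) (r : seq I) (F : I -> gT) :
  (forall i, F i \in A) -> \prod_(i <- r) F i \in A.
Proof. by move=> FA; apply: group_prod => i _; apply: FA. Qed.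

Lemma ab_big_split (I : Type) (r : seq I) (F G : I -> gT) :
  (forall i, F i \in A) -> (forall i, G i \in A) ->
  \prod_(i <- r) (F i * G i) = \prod_(i <- r) F i * \prod_(i <- r) G i.
Proof.
move=> FA GA; elim: r => [|x r IH]; first by rewrite !big_nil mulg1.
rewrite !big_cons IH -!mulgA; congr (_ * _); rewrite !mulgA; congr (_ * _).
by apply: ab_comm => //; apply: ab_prod_mem.
Qed.

Lemma ab_big_rem (I : eqType) (r : seq I) x (F : I -> gT) :
  (forall i, F i \in A) -> x \in r ->
  \prod_(i <- r) F i = F x * \prod_(i <- rem x r) F i.
Proof.
move=> FA; elim: r => [|y r IH] //=; rewrite inE big_cons.
have [-> _|nyx xr] := eqVneq y x; first by move=> /=; rewrite ?eqxx.
have {}xr : x \in r by [].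

move=> /=.
rewrite big_cons IH // !mulgA; congr (_ * _).
by apply: ab_comm.
Qed.

Lemma ab_perm_big (I : eqType) (r s : seq I) (F : I -> gT) :
  (forall i, F i \in A) -> perm_eq r s ->
  \prod_(i <- r) F i = \prod_(i <- s) F i.
Proof.
move=> FA; elim: r s => [|x r IH] s prs.
  by case: s prs => // y s /perm_size.
have xs : x \in s by rewrite -(perm_mem prs) mem_head.
rewrite big_cons (ab_big_rem FA xs); congr (_ * _); apply: IH.
by rewrite -(perm_cons x) (perm_trans prs) // perm_to_rem.
Qed.

End AbProd.

Section Wreath.
Variable q : nat.
Local Notation n := q.+2.
Local Notation Z := 'I_n.
Variables (T : finType) (B : {group {perm T}}).

Local Notation par := (Z * {ffun Z -> {perm T}})%type.

Definition mkf (pr : par) (x : Z * T) : Z * T := ((x.1 + pr.1)%R, pr.2 x.1 x.2).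

Lemma mkf_inj pr : injective (mkf pr).
Proof.
move=> [a y] [b z] E.
have ab : a = b by apply: (GRing.addIr pr.1); exact: (congr1 fst E).
move: E; rewrite /mkf /= ab => -[] /perm_inj ->.
by [].
Qed.

Definition mk pr : {perm (Z * T)} := perm (@mkf_inj pr).

Lemma mkE pr x : mk pr x = mkf pr x.
Proof. by rewrite permE. Qed.

Definition pmul (p1 p2 : par) : par :=
  ((p1.1 + p2.1)%R, [ffun a => p1.2 a * p2.2 (a + p1.1)%R]).

Lemma mk_mul p1 p2 : mk p1 * mk p2 = mk (pmul p1 p2).
Proof.
apply/permP => x; rewrite permM !mkE /mkf /= ffunE permM GRing.addrA.
by [].
Qed.

Definition pone : par := (0%R, [ffun _ : Z => 1]).

Lemma mk1 : mk pone = 1.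
Proof.
apply/permP => -[a y]; rewrite mkE perm1 /mkf /= ffunE perm1 GRing.addr0.
by [].
Qed.

Definition pinv (p : par) : par := ((- p.1)%R, [ffun a : Z => (p.2 (a - p.1)%R)^-1]).

Lemma pmulV p : pmul p (pinv p) = pone.
Proof.
rewrite /pmul /pinv /pone /=; congr pair; first by rewrite GRing.subrr.
by apply/ffunP => a; rewrite !ffunE GRing.addrK mulgV.
Qed.

Lemma mk_inv p : (mk p)^-1 = mk (pinv p).
Proof.
by rewrite -[RHS](mulKg (mk p)) mk_mul pmulV mk1 mulg1.
Qed.

Definition D : {set par} := setX [set: Z] [set f | f \in ffun_on B].

Lemma inD p : (p \in D) = (p.2 \in ffun_on B).
Proof. by case: p => j f; rewrite !inE. Qed.

Lemma D_mul p1 p2 : p1 \in D -> p2 \in D -> pmul p1 p2 \in D.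
Proof.
rewrite !inD => /ffun_onP H1 /ffun_onP H2; apply/ffun_onP => a.
by rewrite ffunE groupM.
Qed.

Lemma D_inv p : p \in D -> pinv p \in D.
Proof.
rewrite !inD => /ffun_onP H1; apply/ffun_onP => a.
by rewrite ffunE groupV.
Qed.

Lemma D_one : pone \in D.
Proof. by rewrite inD; apply/ffun_onP => a; rewrite ffunE. Qed.

Definition W : {set {perm (Z * T)}} := mk @: D.

Lemma W_group_set : group_set W.
Proof.
apply/group_setP; split; first by apply/imsetP; exists pone; rewrite ?mk1 ?D_one.
move=> _ _ /imsetP[p1 H1 ->] /imsetP[p2 H2 ->].
by rewrite mk_mul; apply: imset_f; apply: D_mul.
Qed.

Canonical W_group := Group W_group_set.

Lemma mkW p : p \in D -> mk p \in W.
Proof. by move=> Hp; apply: imset_f. Qed.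

Definition Phi (p : par) := coset (B^`(1)) (\prod_(a : Z) p.2 a).

Let nB x : x \in B -> x \in 'N(B^`(1)).
Proof. by move=> xB; apply: (subsetP (der_norm 1 B)). Qed.

Let abQ : abelian (B / B^`(1)).
Proof. exact: sub_der1_abelian. Qed.

Lemma ab_reindex (gT : finGroupType) (A : {group gT}) (X : Z -> gT) j :
  abelian A -> (forall i, X i \in A) ->
  \prod_(a : Z) X (a + j)%R = \prod_(a : Z) X a.
Proof.
move=> abA XA.
rewrite -(big_map (fun a => (a + j)%R) xpredT X).
apply: (ab_perm_big abA XA).
apply: uniq_perm.
- by rewrite map_inj_uniq ?index_enum_uniq //; exact: GRing.addIr.
- by rewrite index_enum_uniq.
move=> x; rewrite mem_index_enum; apply/mapP; exists (x - j)%R.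
  by rewrite mem_index_enum.
by rewrite GRing.subrK.
Qed.

Lemma Phi_mem p : p \in D -> Phi p \in B / B^`(1).
Proof.
rewrite inD => /ffun_onP Hp; apply: mem_quotient.
by apply: group_prod => a _.
Qed.

Lemma Phi_mul p1 p2 : p1 \in D -> p2 \in D -> Phi (pmul p1 p2) = Phi p1 * Phi p2.
Proof.
case: p1 p2 => j f [j' f']; rewrite !inD /= => /ffun_onP H1 /ffun_onP H2.
rewrite /Phi /= !(morph_prod (coset_morphism _)); last 3 first.
- by move=> a _; apply: nB.
- by move=> a _; apply: nB.
- by move=> a _; rewrite ffunE; apply: nB; rewrite groupM.
rewrite (eq_bigr (fun a => coset (B^`(1)) (f a) * coset (B^`(1)) (f' (a + j)%R))); last first.
  by move=> a _; rewrite ffunE morphM ?nB.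
rewrite (ab_big_split abQ); try by move=> a; apply: mem_quotient.
congr (_ * _).
have := @ab_reindex _ _ (fun a => coset (B^`(1)) (f' a)) j abQ.
by apply => a; apply: mem_quotient.
Qed.

Lemma Phi_one : Phi pone = 1.
Proof.
rewrite /Phi /= big1 ?morph1 // => a _; by rewrite ffunE.
Qed.

Lemma Phi_inv p : p \in D -> Phi (pinv p) = (Phi p)^-1.
Proof.
move=> Hp; apply/esym/eqP; rewrite eq_invg_mul -Phi_mul ?D_inv //.
by rewrite pmulV Phi_one.
Qed.

Lemma Phi1E p : p \in D -> (Phi p == 1) = (\prod_(a : Z) p.2 a \in B^`(1)).
Proof.
rewrite inD => /ffun_onP Hp; apply/eqP/idP => [|H]; last exact: coset_id.
by apply: coset_idr; apply: nB; apply: group_prod.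
Qed.

Definition DK : {set par} := [set p in D | (p.1 == 0%R) && (Phi p == 1)].
Definition K : {set {perm (Z * T)}} := mk @: DK.

Lemma K_group_set : group_set K.
Proof.
apply/group_setP; split.
  apply/imsetP; exists pone; rewrite ?mk1 //.
  by rewrite inE D_one /= Phi_one eqxx.
move=> _ _ /imsetP[p1 + ->] /imsetP[p2 + ->].
rewrite in_set => /and3P[D1 /eqP j1 /eqP F1].
rewrite in_set => /and3P[D2 /eqP j2 /eqP F2].
rewrite mk_mul; apply: imset_f; rewrite in_set D_mul //= j1 j2 GRing.addr0 eqxx /=.
by rewrite Phi_mul // F1 F2 mulg1.
Qed.

Canonical K_group := Group K_group_set.

Lemma comm_K x y : x \in W -> y \in W -> [~ x, y] \in K.
Proof.
move=> /imsetP[p1 H1 ->] /imsetP[p2 H2 ->].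
rewrite /commg /conjg !mulgA !mk_inv !mk_mul; apply: imset_f.
rewrite inE !D_mul ?D_inv //= !Phi_mul ?D_mul ?D_inv // !Phi_inv //.
apply/andP; split.
  apply/eqP; rewrite /=.
  by rewrite -GRing.opprD -GRing.addrA [(p1.1 + p2.1)%R]GRing.addrC GRing.addNr.
have: commute (Phi p1) (Phi p2) by apply: (ab_comm abQ); apply: Phi_mem.
by rewrite /commute -!mulgA => ->; rewrite mulKg mulVg.
Qed.

Lemma der_W_K : W^`(1) \subset K.
Proof.
rewrite derg1 gen_subG; apply/subsetP => _ /imset2P[x y xW yW ->].
exact: comm_K.
Qed.

Variable y0 : T.

Lemma mk_inj : injective mk.
Proof.
move=> [j f] [j' f'] E.
have := congr1 (fun s : {perm (Z * T)} => s (0%R, y0)) E.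
rewrite /= !mkE /mkf /= !GRing.add0r => -[jj _]; subst j'.
congr pair; apply/ffunP => a; apply/permP => y.
by have := congr1 (fun s : {perm (Z * T)} => s (a, y)) E; rewrite /= !mkE /mkf /= => -[].
Qed.

Lemma card_W : #|W| = (n * #|B| ^ n)%N.
Proof.
rewrite /W card_imset; last exact: mk_inj.
by rewrite /D cardsX cardsT card_ord cardsE card_ffun_on card_ord.
Qed.

Definition CW1 (gT : finGroupType) (G : {set gT}) :=
  forall g, g \in G^`(1) -> exists u, exists v, [/\ u \in G, v \in G & g = [~ u, v]].

Lemma ordmax1 : (ord_max + 1 = 0 :> Z)%R.
Proof. by apply: val_inj => /=; rewrite (@modn_small 1) // addn1 modnn. Qed.

Lemma ordS1 (a : Z) : a != ord_max -> val (a + 1)%R = (val a).+1.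
Proof.
move=> na; rewrite /= modn_small // modn_small ?addn1 //.
have := ltn_ord a; rewrite leq_eqVlt => /orP[/eqP ea|//].
by case/eqP: na; apply: val_inj => /=; case: ea.
Qed.

Lemma K_comm (f : {ffun Z -> {perm T}}) u v :
  f \in ffun_on B -> u \in B -> v \in B ->
  \prod_(a : Z) f a = [~ u, v] ->
  exists x, exists y, [/\ x \in W, y \in W & mk (0%R, f) = [~ x, y]].
Proof.
move=> /ffun_onP fB uB vB Hprod.
pose F := fun k : nat => f (inord k).
pose P := fun i : nat => \prod_(1 <= k < i.+1) F k.
pose R := P q.+1.
have FB k : F k \in B by apply: fB.
have PB i : P i \in B by apply: group_prod => k _.
have P0 : P 0 = 1 by rewrite /P big_geq.
have PS i : P i.+1 = P i * F i.+1 by rewrite /P big_nat_recr.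
have Htot : \prod_(a : Z) f a = f 0%R * R.
  rewrite big_ord_recl /R /P big_add1 /= big_mkord; congr (_ * _).
  apply: eq_bigr => i _.
  have E : inord i.+1 = lift ord0 i :> Z by apply: val_inj; rewrite /= inordK // ltnS ltn_ord.
  by rewrite /F E.
pose alpha := [ffun a : Z => if a == ord_max then u else 1].
pose beta := [ffun a : Z => v * (R^-1 * P a)].
exists (mk (1%R, alpha)), (mk (0%R, beta)).
have aD : (1%R, alpha) \in D.
  by rewrite inD; apply/ffun_onP => a; rewrite ffunE; case: ifP.
have bD : (0%R, beta) \in D.
  by rewrite inD; apply/ffun_onP => a; rewrite ffunE !groupM ?groupV ?vB ?PB.
split; try exact: mkW.
have key : mk (1%R, alpha) * mk (0%R, beta) =
           mk (0%R, beta) * mk (1%R, alpha) * mk (0%R, f).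
  rewrite !mk_mul; congr mk; rewrite /pmul /=; congr pair.
    by rewrite !GRing.add0r GRing.addr0.
  apply/ffunP => a; rewrite !ffunE GRing.addr0 GRing.add0r.
  have [->|na] := eqVneq a ord_max.
    rewrite ordmax1 (_ : P (0%R : Z) = 1) // mulg1.
    have -> : P (@ord_max q.+1) = R by [].
    have f0 : f 0%R = [~ u, v] * R^-1 by rewrite -Hprod Htot mulgK.
    rewrite f0 mulVg mulg1 /commg /conjg.
    by rewrite !mulgA mulgK mulgV mul1g.
  rewrite mul1g mulg1.
  rewrite ordS1 // PS !mulgA; congr (_ * _).
  have E : inord (val a).+1 = (a + 1)%R :> Z.
    by apply: val_inj; rewrite ordS1 // /= inordK // -(ordS1 na) ltn_ord.
  by rewrite /F E.
by rewrite /commg /conjg !mulgA -invMg -mulgA key mulKg.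
Qed.

Lemma W_CW1 : CW1 B -> CW1 W.
Proof.
move=> cwB g /(subsetP der_W_K) /imsetP[[j f] + ->].
rewrite in_set => /and3P[Dp /eqP /= j0 F1]; subst j.
rewrite Phi1E // in F1.
have [u [v [uB vB Huv]]] := cwB _ F1.
apply: (K_comm (f := f) (u := u) (v := v) _ uB vB Huv).
by rewrite inD in Dp.
Qed.

Lemma W_nonab : (exists2 b, b \in B & b != 1) ->
  exists2 g, g \in W^`(1) & g != 1.
Proof.
move=> [b bB nb1].
pose delta := [ffun a : Z => if a == 0%R then b else 1].
pose x := mk (1%R, [ffun _ : Z => 1]).
pose y := mk (0%R, delta).
have xW : x \in W by apply: mkW; rewrite inD; apply/ffun_onP => a; rewrite ffunE.
have yW : y \in W.
  by apply: mkW; rewrite inD; apply/ffun_onP => a; rewrite ffunE; case: ifP.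
exists [~ x, y]; first by rewrite derg1 mem_commg.
apply/negP => /commgP; rewrite /commute /x /y !mk_mul => /mk_inj [] /ffunP /(_ 0%R).
rewrite !ffunE GRing.add0r mul1g mulg1 /=.
by move=> E; move: nb1; rewrite -E eqxx.
Qed.

End Wreath.

Section Tower.
Variable q : nat.
Local Notation n := q.+2.

Fixpoint Tk (k : nat) : finType :=
  if k is k'.+1 then ('I_n * Tk k')%type else unit.

Fixpoint pt k : Tk k :=
  match k return Tk k with 0 => tt | k'.+1 => (ord0, pt k') end.

Fixpoint Bk k : {group {perm (Tk k)}} :=
  match k return {group {perm (Tk k)}} with
  | 0 => 1%G
  | k'.+1 => W_group q (Bk k')
  end.

Definition ek k := (\sum_(i < k) n ^ i)%N.

Lemma card_Tk k : #|Tk k| = (n ^ k)%N.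
Proof.
elim: k => [|k IH] /=; first by rewrite card_unit.
by rewrite card_prod card_ord IH expnS.
Qed.

Lemma ekS k : ek k.+1 = (n * ek k).+1.
Proof.
rewrite /ek big_ord_recl expn0 add1n big_distrr /=; congr _.+1.
by apply: eq_bigr => i _; rewrite expnS.
Qed.

Lemma card_Bk k : #|Bk k| = (n ^ ek k)%N.
Proof.
elim: k => [|k IH] /=; first by rewrite cards1 /ek big_ord0.
rewrite (card_W q (Bk k) (pt k)) IH ekS [RHS]expnS; congr (_ * _)%N.
by rewrite -expnM mulnC.
Qed.

Lemma CW1_Bk k : CW1 (Bk k).
Proof.
elim: k => [|k IH] /=.
  move=> g; rewrite derg1 commG1 => /set1P ->.
  by exists 1, 1; rewrite group1 comm1g.
exact: W_CW1.
Qed.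

Lemma nontriv_Bk k : 0 < k -> exists2 b, b \in Bk k & b != 1.
Proof.
move=> k0; apply/trivgPn; rewrite trivg_card1 card_Bk.
case: k k0 => // k _; rewrite ekS expnS.
by rewrite muln_eq1.
Qed.

Lemma nonab_Bk k : 1 < k -> exists2 g, g \in (Bk k)^`(1) & g != 1.
Proof.
case: k => // k k1 /=.
apply: (W_nonab q (pt k)); apply: nontriv_Bk.
by [].
Qed.

End Tower.

Definition nonab (gT : finGroupType) (G : {set gT}) :=
  exists2 g, g \in G^`(1) & g != 1.

Section Transfer.
Variables (T : finType) (m : nat) (Hc : #|T| = m).

Let e (t : T) : 'I_m := cast_ord Hc (enum_rank t).
Let e' (i : 'I_m) : T := enum_val (cast_ord (esym Hc) i).
Let ee' : cancel e' e.
Proof. by move=> i; rewrite /e /e' enum_valK cast_ordKV. Qed.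
Let e'e : cancel e e'.
Proof. by move=> t; rewrite /e /e' cast_ordK enum_rankK. Qed.

Let trf (s : {perm T}) (i : 'I_m) := e (s (e' i)).
Let trf_inj s : injective (trf s).
Proof. by move=> i j /(can_inj e'e) /perm_inj /(can_inj ee'). Qed.
Definition tr (s : {perm T}) : 'S_m := perm (@trf_inj s).

Lemma trM : {in [set: {perm T}] &, {morph tr : s t / s * t}}.
Proof.
move=> s t _ _; apply/permP => i.
by rewrite permM !permE /trf permM e'e.
Qed.

Canonical tr_morph := Morphism trM.

Lemma tr_injm : 'injm tr_morph.
Proof.
apply/injmP => s t _ _ E; apply/permP => x.
have := congr1 (fun g : 'S_m => g (e x)) E.
by rewrite /= !permE /trf e'e => /(can_inj e'e).
Qed.

Lemma transfer (G : {group {perm T}}) :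
  exists H : {group 'S_m},
    [/\ #|H| = #|G|, CW1 G -> CW1 H & nonab G -> nonab H].
Proof.
exists (tr_morph @* G)%G; split.
- by rewrite card_injm ?tr_injm ?subsetT.
- move=> cwG g; rewrite -morphim_der ?subsetT //.
  case/morphimP=> x _ xG' ->.
  have [u [v [uG vG ->]]] := cwG x xG'.
  exists (tr_morph u), (tr_morph v); split; try exact: mem_morphim.
  by rewrite morphR ?inE.
- move=> [g gG' ng1]; exists (tr_morph g).
    by rewrite -morphim_der ?subsetT // mem_morphim ?inE.
  by rewrite (morph_injm_eq1 tr_injm) ?inE.
Qed.
End Transfer.

Lemma CW1_conj (gT : finGroupType) (G : {group gT}) x : CW1 G -> CW1 (G :^ x).
Proof.
move=> cwG g; rewrite derg1 -conjsRg -derg1 mem_conjg => /cwG [u [v [uG vG E]]].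
exists (u ^ x), (v ^ x); rewrite !memJ_conjg -conjRg -E conjgKV.
by split.
Qed.

Lemma nonab_conj (gT : finGroupType) (G : {group gT}) x : nonab G -> nonab (G :^ x).
Proof.
move=> [g gG ng]; exists (g ^ x).
  by rewrite derg1 -conjsRg -derg1 memJ_conjg.
by rewrite conjg_eq1.
Qed.

Lemma cw_of (gT : finGroupType) (G : {group gT}) :
  CW1 G -> nonab G -> commutator_width_is G 1.
Proof.
move=> cwG [g gG ng]; split.
  move=> h /cwG [u [v [uG vG ->]]]; exists 1%N => //.
  exists [:: (u, v)]; split => //=; first by rewrite uG vG.
  by rewrite big_seq1.
exists g => // m; rewrite ltnS leqn0 => /eqP -> [s [s0 _ E]].
by move: ng; rewrite E; case: s s0 E => // _ _; rewrite big_nil eqxx.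
Qed.

Lemma sym_part p k : prime p -> 1 < k ->
  forall P : {group 'S_(p ^ k)}, (p.-Sylow('Sym_('I_(p ^ k))) P)%g ->
  CW1 P /\ nonab P.
Proof.
case: p => [|[|q]] pp // k2 P sylP.
have [H [cH cwH naH]] := transfer (card_Tk q k) (Bk q k).
have sylH : (q.+2).-Sylow('Sym_('I_(q.+2 ^ k))) H.
  rewrite pHallE subsetT /= cH card_Bk card_Sym card_ord p_part.
  by rewrite logn_fact_pow.
have [x _ ->] := Sylow_trans sylH sylP.
split; first by apply: CW1_conj; apply: cwH; apply: CW1_Bk.
by apply: nonab_conj; apply: naH; apply: nonab_Bk.
Qed.

Lemma alt_sylow p k : prime p -> 2 < p -> 0 < k ->
  forall P : {group 'S_(p ^ k)}, (p.-Sylow('Alt_('I_(p ^ k))) P)%g ->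
  (p.-Sylow('Sym_('I_(p ^ k))) P)%g.
Proof.
move=> pp p2 k0 P; rewrite !pHallE subsetT /= => /andP[_ /eqP ->].
rewrite card_Sym -card_Alt; last by rewrite card_ord -{1}(expn0 p) ltn_exp2l ?prime_gt1.
rewrite partnM ?cardG_gt0 // (@part_p'nat _ 2) ?mul1n //.
by rewrite pnatE // inE /= inE neq_ltn p2.
Qed.


End Helpers.

Theorem mainTheorem8 :
  (forall (p k : nat), prime p -> 2 <= k ->
     forall P : {group 'S_(p ^ k)}, (p.-Sylow('Sym_('I_(p ^ k))) P)%g ->
       commutator_width_is P 1) /\
  (forall (p k : nat), prime p -> 2 < p -> 2 <= k ->
     forall P : {group 'S_(p ^ k)}, (p.-Sylow('Alt_('I_(p ^ k))) P)%g ->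
       commutator_width_is P 1).
Proof.
split.
  move=> p k pp k2 P sylP; have [c n] := Helpers.sym_part pp k2 sylP.
  exact: Helpers.cw_of.
move=> p k pp p2 k2 P sylP.
have sylP' := Helpers.alt_sylow pp p2 (ltnW k2) sylP.
have [c n] := Helpers.sym_part pp k2 sylP'.
exact: Helpers.cw_of.
Qed.
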